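(* Let $W$ be a real $p\times p$ matrix that is similar to a symmetric positive semidefinite matrix and satisfies $\mathrm{tr}(W)>0$. Let $c>0$, $\hat\alpha=c\,\mathrm{tr}(W)$ and $V=(W+\hat\alpha I_p)^{-1}$. Then: (1) $1/(1+c)\le\mathrm{tr}(VW)\le p/(1+cp)$; (2) $p^2/(1+cp)\le\mathrm{tr}(V)\,\mathrm{tr}(W)\le p/c$; (3) $\mathrm{tr}(V^2W)\le\mathrm{tr}(V)/(1+cp)\le\mathrm{tr}(V)$; (4) $\mathrm{tr}(V^3W)\le\mathrm{tr}(V^2)/(1+cp)\le(\mathrm{tr}V)^2/(1+cp)$; (5) $\mathrm{tr}(V^3W)\le\mathrm{tr}(V^2W)\,\mathrm{tr}(V)$; (6) $\mathrm{tr}(V^2)\le(\mathrm{tr}V)^2\big[1-(p-1)c/\{p(1+c)\}\big]$; (7) $\mathrm{tr}(V^3W)\le\mathrm{tr}(V^2W)\,\mathrm{tr}(V)\big[1-(p-1)c/\{p(1+c)\}\big]$; (8) $-c\{\mathrm{tr}(V)\mathrm{tr}(W)-\mathrm{tr}(VW)\}/(1+cp)\le-\mathrm{tr}(VW)+(1+c)\mathrm{tr}(V^2W^2)\le0$.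
   Context: In the paper this is applied with $W=(X-\bar X)(X-\bar X)^\top\Sigma^{-1}$ in the case $n-1\ge p$, where $\bar X$ is the matrix whose columns all equal the sample mean of the columns of $X$ and $\Sigma$ is positive definite; such $W$ is similar to the symmetric positive semidefinite matrix $\Sigma^{-1/2}(X-\bar X)(X-\bar X)^\top\Sigma^{-1/2}$. *)

(* Defs.v *)
(* Real p x p matrices are modelled over an arbitrary
   real closed field R (which includes the reals). *)
From HB Require Import structures.
From mathcomp Require Import all_boot all_order all_algebra.
Set Implicit Arguments. Unset Strict Implicit. Unset Printing Implicit Defensive.
Import Order.TTheory GRing.Theory Num.Theory.
Local Open Scope ring_scope.

Definition psd_mx (R : rcfType) (n : nat) (S : 'M[R]_n) : Prop :=
  S^T = S /\ forall x : 'rV[R]_n, 0 <= (x *m S *m x^T) 0 0.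

Definition similar_to_psd (R : rcfType) (n : nat) (W : 'M[R]_n) : Prop :=
  exists (P S : 'M[R]_n), P \in unitmx /\ psd_mx S /\ W = P *m S *m invmx P.

(* Main.v *)
Require Import Defs.
From HB Require Import structures.
From mathcomp Require Import all_boot all_order all_algebra.
From mathcomp Require Import complex.
From mathcomp Require Import ring lra.
Import Order.TTheory GRing.Theory Num.Theory.
Set Implicit Arguments. Unset Strict Implicit. Unset Printing Implicit Defensive.
Local Open Scope ring_scope.

Lemma cheb (R : realFieldType) n (x y : 'I_n -> R) :
  (forall i j, (x i - x j) * (y i - y j) <= 0) ->
  n%:R * \sum_i x i * y i <= (\sum_i x i) * (\sum_i y i).
Proof.
move=> H.
have Hs : \sum_i \sum_j (x i - x j) * (y i - y j) <= 0.
  by apply: sumr_le0 => i _; apply: sumr_le0 => j _; apply: H.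
set Sx := \sum_i x i; set Sy := \sum_i y i; set Sxy := \sum_i x i * y i.
have inner i : \sum_j (x i - x j) * (y i - y j) =
    x i * y i *+ n + Sxy - x i * Sy - y i * Sx.
  transitivity (\sum_j (x i * y i + x j * y j - x i * y j - y i * x j)).
    by apply: eq_bigr => j _; ring.
  rewrite !sumrB big_split /= sumr_const card_ord -!mulr_sumr.
  by [].
rewrite (eq_bigr _ (fun i _ => inner i)) in Hs.
rewrite !sumrB big_split /= sumr_const card_ord -mulr_suml -mulr_suml in Hs.
rewrite -/Sx -/Sy -/Sxy in Hs.
have e : \sum_i x i * y i *+ n = n%:R * Sxy by rewrite sumrMnl mulr_natl.
rewrite e in Hs; lra.
Qed.

Lemma scal (R : realFieldType) (p : nat) (r : 'I_p -> R) (c : R) :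
  (forall i, 0 <= r i) -> 0 < \sum_i r i -> 0 < c ->
  let T := \sum_i r i in
  let v := fun i => (r i + c * T)^-1 in
  let pR : R := p%:R in
  let k : R := 1 - (pR - 1) * c / (pR * (1 + c)) in
  (1 / (1 + c) <= \sum_i v i * r i /\ \sum_i v i * r i <= pR / (1 + c * pR)) /\
  (pR ^+ 2 / (1 + c * pR) <= (\sum_i v i) * T /\ (\sum_i v i) * T <= pR / c) /\
  (\sum_i v i * v i * r i <= (\sum_i v i) / (1 + c * pR) /\
     (\sum_i v i) / (1 + c * pR) <= \sum_i v i) /\
  (\sum_i v i * v i * v i * r i <= (\sum_i v i * v i) / (1 + c * pR) /\
   (\sum_i v i * v i) / (1 + c * pR) <= (\sum_i v i) ^+ 2 / (1 + c * pR)) /\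
  \sum_i v i * v i * v i * r i <= (\sum_i v i * v i * r i) * (\sum_i v i) /\
  \sum_i v i * v i <= (\sum_i v i) ^+ 2 * k /\
  \sum_i v i * v i * v i * r i <= (\sum_i v i * v i * r i) * (\sum_i v i) * k /\
  (- c * ((\sum_i v i) * T - \sum_i v i * r i) / (1 + c * pR)
     <= - (\sum_i v i * r i) + (1 + c) * (\sum_i v i * v i * r i * r i) /\
   - (\sum_i v i * r i) + (1 + c) * (\sum_i v i * v i * r i * r i) <= 0).
Proof.
move=> r0 T0 c0 T v pR k.
have pR1 : 1 <= pR.
  rewrite /pR ler1n lt0n; apply/eqP => p0; move: T0; rewrite /T.
  by move: r {r0 v T}; rewrite p0 => r; rewrite big_ord0 ltxx.
have pR0 : 0 < pR by lra.
set a := c * T.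
have a0 : 0 < a by apply: mulr_gt0.
have ri_le i : r i <= T.
  by rewrite /T (bigD1 i) //= lerDl sumr_ge0.
have rv0 i : 0 < r i + a by apply: ltr_wpDl.
have v0 i : 0 < v i by rewrite invr_gt0.
have vE i : v i * (r i + a) = 1 by rewrite mulVf // gt_eqF.
have rvE i : v i * r i = 1 - a * v i.
  by have := vE i; rewrite mulrDr => h; lra.
have vr0 i : 0 <= v i * r i by apply: mulr_ge0; [apply: ltW|].
have av_le i : a * v i <= 1 by have := vr0 i; rewrite rvE; lra.
have vL i : 1 <= (1 + c) * T * v i.
  have e : (1 + c) * T * v i - 1 = v i * (T - r i).
    by rewrite -[X in _ - X = _](vE i) /a; ring.
  have : 0 <= v i * (T - r i) by apply: mulr_ge0; [apply: ltW| rewrite subr_ge0].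
  by rewrite -e subr_ge0.
set Sv := \sum_i v i.
set Srv := \sum_i v i * r i.
have Sv0 : 0 <= Sv by apply: sumr_ge0 => i _; apply: ltW.
have Srv0 : 0 <= Srv by apply: sumr_ge0 => i _.
have SrvE : Srv = pR - a * Sv.
  rewrite /Srv (eq_bigr _ (fun i _ => rvE i)) sumrB sumr_const card_ord.
  by rewrite -mulr_sumr.
have aSv : a * Sv <= pR.
  rewrite /Sv mulr_sumr; apply: (le_trans (ler_sum _ (fun i _ => av_le i))).
  by rewrite sumr_const card_ord.
have T0' : T != 0 by rewrite gt_eqF.
have cpR0 : 0 < 1 + c * pR by have := mulr_gt0 c0 pR0; lra.
(* (2) lower via tangent line *)
set m := T / pR.
have m0 : 0 < m by rewrite /m divr_gt0.
set g := (m + a)^-1.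
have tang i : g - (r i - m) * g ^+ 2 <= v i.
  have e : v i - (g - (r i - m) * g ^+ 2) = (r i - m) ^+ 2 * g ^+ 2 * v i.
    rewrite /v /g -/a; field.
    by apply/andP; split; rewrite gt_eqF // ?addr_gt0.
  rewrite -subr_ge0 e; apply: mulr_ge0; last exact: ltW.
  by apply: mulr_ge0; apply: sqr_ge0.
have Svlow : pR * g <= Sv.
  apply: le_trans (ler_sum _ (fun i _ => tang i)).
  rewrite sumrB sumr_const card_ord -mulr_suml sumrB sumr_const card_ord -/T.
  have -> : T - m *+ p = 0 by rewrite -mulr_natl /m -/pR; field; rewrite gt_eqF.
  by rewrite mul0r subr0 mulr_natl.
have gE : pR * g * T = pR ^+ 2 / (1 + c * pR).
  rewrite /g /m /a; field; apply/and3P; split; rewrite gt_eqF //.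
  by rewrite addr_gt0 // ?divr_gt0 // mulr_gt0.
have two_low : pR ^+ 2 / (1 + c * pR) <= Sv * T.
  by rewrite -gE ler_pM2r.
have two_up : Sv * T <= pR / c.
  have -> : Sv * T = (a * Sv) / c by rewrite /a; field; rewrite gt_eqF.
  by apply: ler_wpM2r => //; rewrite invr_ge0 ltW.
have one_up : Srv <= pR / (1 + c * pR).
  have e1 : pR - c * (pR ^+ 2 / (1 + c * pR)) = pR / (1 + c * pR).
    by field; rewrite gt_eqF.
  have h : c * (pR ^+ 2 / (1 + c * pR)) <= c * (Sv * T) by rewrite ler_pM2l.
  have e2 : a * Sv = c * (Sv * T) by rewrite /a; ring.
  by rewrite -e1 SrvE; lra.
have one_low : 1 / (1 + c) <= Srv.
  have h : T <= Srv * ((1 + c) * T).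
    rewrite /Srv mulr_suml /T; apply: ler_sum => i _.
    have := vL i; have := r0 i; rewrite -/T; nra.
  rewrite ler_pdivrMr; last lra.
  by rewrite -(ler_pM2r T0) mul1r -mulrA.
have rvd i j : v i * r i - v j * r j = - a * (v i - v j).
  by rewrite !rvE; ring.
set Svvr := \sum_i v i * v i * r i.
set Svv := \sum_i v i * v i.
set Svvvr := \sum_i v i * v i * v i * r i.
have Svv0 : 0 <= Svv by apply: sumr_ge0 => i _; apply: mulr_ge0; apply: ltW.
have Svvr0 : 0 <= Svvr.
  by apply: sumr_ge0 => i _; rewrite -mulrA; apply: mulr_ge0; [apply: ltW|].
have vvr0 i : 0 <= v i * v i * r i by rewrite -mulrA; apply: mulr_ge0; [apply: ltW|].
have cheb1 : pR * Svvr <= Sv * Srv.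
  have -> : Svvr = \sum_i v i * (v i * r i).
    by apply: eq_bigr => i _; rewrite mulrA.
  apply: (@cheb R p v (fun i => v i * r i)) => i j; rewrite rvd.
  have -> : (v i - v j) * (- a * (v i - v j)) = - (a * (v i - v j) ^+ 2) by ring.
  by rewrite oppr_le0; apply: mulr_ge0; [apply: ltW| apply: sqr_ge0].
have three : Svvr <= Sv / (1 + c * pR).
  have h := le_trans cheb1 (ler_wpM2l Sv0 one_up).
  rewrite (_ : Sv * (pR / (1 + c * pR)) = pR * (Sv / (1 + c * pR))) in h; last by ring.
  by rewrite ler_pM2l in h.
have threeb : Sv / (1 + c * pR) <= Sv.
  rewrite ler_pdivrMr //.
  have : 0 <= Sv * c * pR by apply: mulr_ge0; [apply: mulr_ge0 => //; apply: ltW|apply: ltW].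
  lra.
have cheb2 : pR * Svvvr <= Svv * Srv.
  have -> : Svvvr = \sum_i (v i * v i) * (v i * r i).
    by apply: eq_bigr => i _; rewrite !mulrA.
  apply: (@cheb R p (fun i => v i * v i) (fun i => v i * r i)) => i j; rewrite rvd.
  have -> : (v i * v i - v j * v j) * (- a * (v i - v j)) =
     - (a * (v i + v j) * (v i - v j) ^+ 2) by ring.
  rewrite oppr_le0; apply: mulr_ge0; last exact: sqr_ge0.
  by apply: mulr_ge0; [apply: ltW| apply: addr_ge0; apply: ltW].
have four : Svvvr <= Svv / (1 + c * pR).
  have h := le_trans cheb2 (ler_wpM2l Svv0 one_up).
  rewrite (_ : Svv * (pR / (1 + c * pR)) = pR * (Svv / (1 + c * pR))) in h; last by ring.
  by rewrite ler_pM2l in h.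
have vSv i : v i <= Sv.
  by rewrite /Sv (bigD1 i) //= lerDl; apply: sumr_ge0 => j _; apply: ltW.
have fourb : Svv / (1 + c * pR) <= Sv ^+ 2 / (1 + c * pR).
  apply: ler_wpM2r; first by rewrite invr_ge0 ltW.
  rewrite expr2 /Svv mulr_suml; apply: ler_sum => i _.
  by apply: ler_wpM2l; [apply: ltW|].
have five : Svvvr <= Svvr * Sv.
  rewrite /Svvr mulr_suml; apply: ler_sum => i _.
  rewrite (_ : v i * v i * v i * r i = v i * v i * r i * v i); last by ring.
  by apply: ler_wpM2l.
set L := ((1 + c) * T)^-1.
have vLi i : L <= v i.
  rewrite /L -[((1 + c) * T)^-1]mulr1 ler_pdivrMl; last by apply: mulr_gt0 => //; lra.
  by apply: vL.
have key i : v i <= k * Sv.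
  have h1 : v i - L <= Sv - pR * L.
    have -> : Sv - pR * L = \sum_j (v j - L).
      by rewrite sumrB sumr_const card_ord mulr_natl.
    rewrite (bigD1 i) //= lerDl; apply: sumr_ge0 => j _.
    by rewrite subr_ge0.
  have Y0 : 0 <= (pR - 1) / (pR * (1 + c)).
    by apply: divr_ge0; [lra| apply: mulr_ge0; lra].
  have h2 : c * Sv <= pR / T.
    have -> : c * Sv = (a * Sv) / T by rewrite /a; field.
    by apply: ler_wpM2r => //; rewrite invr_ge0 ltW.
  have h3 := ler_wpM2l Y0 h2.
  have e1 : (pR - 1) / (pR * (1 + c)) * (c * Sv) = (1 - k) * Sv.
    by rewrite /k; ring.
  have e2 : (pR - 1) / (pR * (1 + c)) * (pR / T) = (pR - 1) * L.
    rewrite /L; field; apply/and3P; split; rewrite gt_eqF //; lra.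
  rewrite e1 e2 in h3.
  have e3 : (1 - k) * Sv = Sv - k * Sv by ring.
  have e4 : (pR - 1) * L = pR * L - L by ring.
  rewrite e3 e4 in h3.
  lra.
have six : Svv <= Sv ^+ 2 * k.
  have -> : Sv ^+ 2 * k = \sum_i v i * (k * Sv).
    by rewrite -mulr_suml -/Sv; ring.
  apply: ler_sum => i _; apply: ler_wpM2l; [apply/ltW/v0|apply: key].
have seven : Svvvr <= Svvr * Sv * k.
  have -> : Svvr * Sv * k = \sum_i v i * v i * r i * (k * Sv).
    by rewrite -mulr_suml -/Svvr; ring.
  apply: ler_sum => i _.
  rewrite (_ : v i * v i * v i * r i = v i * v i * r i * v i); last by ring.
  by apply: ler_wpM2l => //; apply: key.
set Svvrr := \sum_i v i * v i * r i * r i.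
have term i : - (v i * r i) + (1 + c) * (v i * v i * r i * r i) =
    - c * ((v i * r i) * ((T - r i) * v i)).
  have e : forall X, X = 1 - a * v i ->
      - X + (1 + c) * X ^+ 2 = - c * (X * (T * v i - X)).
    by move=> X ->; rewrite /a; ring.
  have := e _ (rvE i).
  have -> : (T - r i) * v i = T * v i - v i * r i by ring.
  have -> : v i * v i * r i * r i = (v i * r i) ^+ 2 by ring.
  by [].
have E8 : - Srv + (1 + c) * Svvrr = - c * \sum_i (v i * r i) * ((T - r i) * v i).
  rewrite mulr_sumr mulr_sumr /Srv -sumrN -big_split /=.
  by apply: eq_bigr => i _; rewrite term.
have eight_up : - Srv + (1 + c) * Svvrr <= 0.
  rewrite E8 mulNr oppr_le0; apply: mulr_ge0; first exact: ltW.
  apply: sumr_ge0 => i _; apply: mulr_ge0 => //.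
  by apply: mulr_ge0; [rewrite subr_ge0|apply: ltW].
have SY : \sum_i (T - r i) * v i = Sv * T - Srv.
  rewrite /Sv /Srv mulr_suml -sumrB; apply: eq_bigr => i _; ring.
have Y0 : 0 <= Sv * T - Srv.
  rewrite -SY; apply: sumr_ge0 => i _.
  by apply: mulr_ge0; [rewrite subr_ge0|apply: ltW].
have cheb3 : pR * \sum_i (v i * r i) * ((T - r i) * v i) <= Srv * (Sv * T - Srv).
  rewrite -SY; apply: cheb => i j.
  rewrite rvd.
  have -> : (T - r i) * v i - (T - r j) * v j = (T + a) * (v i - v j).
    by have := rvE i; have := rvE j; rewrite /a => hi hj; nra.
  have -> : - a * (v i - v j) * ((T + a) * (v i - v j)) =
     - (a * (T + a) * (v i - v j) ^+ 2) by ring.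
  rewrite oppr_le0; apply: mulr_ge0; last exact: sqr_ge0.
  by apply: mulr_ge0; [apply: ltW| apply: addr_ge0; apply: ltW].
have eight_low : - c * (Sv * T - Srv) / (1 + c * pR) <= - Srv + (1 + c) * Svvrr.
  rewrite E8.
  have h := le_trans cheb3 (ler_wpM2r Y0 one_up).
  rewrite (_ : pR / (1 + c * pR) * (Sv * T - Srv) =
              pR * ((Sv * T - Srv) / (1 + c * pR))) in h; last by ring.
  rewrite ler_pM2l // in h.
  rewrite !mulNr -mulrA lerN2 ler_pM2l //.
by do !split.
Qed.

Lemma inv_uniq (K : fieldType) n (X Y : 'M[K]_n) : X *m Y = 1%:M -> invmx X = Y.
Proof.
move=> XY; have [uX _] := mulmx1_unit XY.
by rewrite -[invmx X]mulmx1 -XY mulmxA mulVmx // mul1mx.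
Qed.

Definition Fd (K : fieldType) n (M : 'M[K]_n) (g : 'I_n -> K) :=
  invmx M *m diag_mx (\row_i g i) *m M.

Lemma FdM (K : fieldType) n (M : 'M[K]_n) g h : M \in unitmx ->
  Fd M g *m Fd M h = Fd M (fun i => g i * h i).
Proof.
move=> uM; rewrite /Fd !mulmxA mulmxK // -[_ *m diag_mx _ *m diag_mx _]mulmxA.
rewrite mulmx_diag; congr (_ *m _ *m _); apply/matrixP => i j; rewrite !mxE.
by [].
Qed.

Lemma FdD (K : fieldType) n (M : 'M[K]_n) g h :
  Fd M g + Fd M h = Fd M (fun i => g i + h i).
Proof.
rewrite /Fd -mulmxDl -mulmxDr; congr (_ *m _ *m _).
by apply/matrixP => i j; rewrite !mxE -mulrnDl.
Qed.

Lemma Fdc (K : fieldType) n (M : 'M[K]_n) a : M \in unitmx ->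
  a%:M = Fd M (fun _ => a).
Proof.
move=> uM; rewrite /Fd.
have -> : diag_mx (\row_(i < n) a) = a%:M by apply/matrixP => i j; rewrite !mxE.
transitivity (a%:M *m invmx M *m M).
  by rewrite -mulmxA mulVmx // mulmx1.
by congr (_ *m _); exact: (esym (scalar_mxC a (invmx M))).
Qed.

Lemma Fd_ext (K : fieldType) n (M : 'M[K]_n) g h :
  (forall i, g i = h i) -> Fd M g = Fd M h.
Proof.
by move=> e; rewrite /Fd; congr (_ *m _ *m _); apply/matrixP => i j; rewrite !mxE e.
Qed.

Lemma FdV (K : fieldType) n (M : 'M[K]_n) g : M \in unitmx ->
  (forall i, g i != 0) -> invmx (Fd M g) = Fd M (fun i => (g i)^-1).
Proof.
move=> uM g0; apply: inv_uniq; rewrite FdM //.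
by rewrite (Fd_ext _ (h := fun _ => 1)) -?Fdc // => i; rewrite mulfV.
Qed.

Lemma Fdtr (K : fieldType) n (M : 'M[K]_n) g : M \in unitmx ->
  \tr (Fd M g) = \sum_i g i.
Proof.
move=> uM; rewrite /Fd mxtrace_mulC mulmxA mulmxV // mul1mx mxtrace_diag.
by apply: eq_bigr => i _; rewrite mxE.
Qed.

Lemma conjE (R : rcfType) (z : R[i]) :
  Num.conj z = complex.Complex (complex.Re z) (- complex.Im z).
Proof.
rewrite {1}[z]complexE complexiE conjC_rect; last 2 first.
- by rewrite complex_real.
- by rewrite complex_real.
by rewrite -complexiE; case: z => a b /=; simpc.
Qed.

Lemma Re_sum (R : rcfType) (I : finType) (F : I -> R[i]) :
  complex.Re (\sum_i F i) = \sum_i complex.Re (F i).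
Proof.
apply: (big_morph (@complex.Re R)) => //.
by move=> [a b] [c d].
Qed.

Lemma psd_spectral (R : rcfType) n (S : 'M[R]_n) : psd_mx S ->
  exists (U : 'M[R[i]]_n) (d : 'I_n -> R), U \in unitmx /\ (forall i, 0 <= d i) /\
    map_mx (real_complex R) S = Fd U (fun i => real_complex R (d i)).
Proof.
move=> [Ssym Spsd].
set SC := map_mx (real_complex R) S.
have Hsym : SC \is symmetricmx.
  apply/is_hermitianmxP; rewrite expr0 scale1r map_mx_id //.
  by rewrite /SC map_trmx Ssym.
have Hreal : SC \is a mxOver Num.real.
  by apply/mxOverP => i j; rewrite mxE complex_real.
have /orthomx_spectralP E := symmetric_normalmx Hsym Hreal.
have Dreal := hermitian_spectral_diag_real (realsym_hermsym Hsym Hreal).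
set U := spectralmx SC in E Dreal *; set D := spectral_diag SC in E Dreal *.
have uU : U \in unitmx := spectral_unit SC.
have Uu : U \is unitarymx := spectral_unitarymx SC.
have UD : U *m SC *m invmx U = diag_mx D.
  by rewrite {1}E !mulmxA mulmxV // mul1mx mulmxK.
exists U, (fun i => complex.Re (D 0 i)); split; first exact: uU.
split; last first.
  rewrite {1}E /Fd; congr (_ *m _ *m _).
  apply/matrixP => i j; rewrite !mxE; congr (_ *+ _).
  by rewrite RRe_real //; apply: (mxOverP Dreal).
move=> i.
have tm (u w : R[i]) (s : R) : complex.Re (u * real_complex R s * Num.conj w) =
    s * (complex.Re u * complex.Re w + complex.Im u * complex.Im w).
  by rewrite conjE; case: u => a b; case: w => c d /=; ring.
have -> : D 0 i = (U *m SC *m invmx U) i i by rewrite UD mxE eqxx mulr1n.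
set aR := \row_j complex.Re (U i j).
set bR := \row_j complex.Im (U i j).
have e : complex.Re ((U *m SC *m invmx U) i i) =
    (aR *m S *m aR^T) 0 0 + (bR *m S *m bR^T) 0 0.
  rewrite invmx_unitary // !mxE Re_sum -big_split /=; apply: eq_bigr => k _.
  rewrite !mxE mulr_suml Re_sum mulr_suml mulr_suml -big_split /=.
  apply: eq_bigr => l _; rewrite !mxE tm; ring.
by rewrite e; apply: addr_ge0; apply: Spsd.
Qed.

Theorem lemmaA1 (R : rcfType) (p : nat) (W : 'M[R]_p) (c : R)
    (hW : similar_to_psd W) (htr : 0 < \tr W) (hc : 0 < c) :
  let alpha := c * \tr W in
  let V := invmx (W + alpha%:M) in
  let pR : R := p%:R in
  let k : R := 1 - (pR - 1) * c / (pR * (1 + c)) in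
  (* (1) *)
  (1 / (1 + c) <= \tr (V *m W) /\ \tr (V *m W) <= pR / (1 + c * pR)) /\
  (* (2) *)
  (pR ^+ 2 / (1 + c * pR) <= \tr V * \tr W /\ \tr V * \tr W <= pR / c) /\
  (* (3) *)
  (\tr (V *m V *m W) <= \tr V / (1 + c * pR) /\ \tr V / (1 + c * pR) <= \tr V) /\
  (* (4) *)
  (\tr (V *m V *m V *m W) <= \tr (V *m V) / (1 + c * pR) /\
   \tr (V *m V) / (1 + c * pR) <= (\tr V) ^+ 2 / (1 + c * pR)) /\
  (* (5) *)
  \tr (V *m V *m V *m W) <= \tr (V *m V *m W) * \tr V /\
  (* (6) *)
  \tr (V *m V) <= (\tr V) ^+ 2 * k /\
  (* (7) *)
  \tr (V *m V *m V *m W) <= \tr (V *m V *m W) * \tr V * k /\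
  (* (8) *)
  (- c * (\tr V * \tr W - \tr (V *m W)) / (1 + c * pR)
     <= - \tr (V *m W) + (1 + c) * \tr (V *m V *m W *m W) /\
   - \tr (V *m W) + (1 + c) * \tr (V *m V *m W *m W) <= 0).
Proof.
Proof.
move=> alpha V pR k.
case: hW => P [S [uP [psdS WE]]].
have [U [d [uU [d0 SE]]]] := psd_spectral psdS.
set M := U *m invmx (map_mx (real_complex R) P).
have uPC : map_mx (real_complex R) P \in unitmx by rewrite map_unitmx.
have uM : M \in unitmx by rewrite unitmx_mul uU unitmx_inv uPC.
have invM : invmx M = map_mx (real_complex R) P *m invmx U.
  apply: inv_uniq; rewrite /M -!mulmxA (mulmxA (invmx _)) mulVmx // mul1mx.
  by rewrite mulmxV.
have WC : map_mx (real_complex R) W = Fd M (fun i => (real_complex R) (d i)).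
  by rewrite WE !map_mxM map_invmx SE /Fd invM !mulmxA.
have trF : forall X h, map_mx (real_complex R) X = Fd M (fun i => (real_complex R) (h i)) ->
    \tr X = \sum_i h i.
  move=> X h e; apply: (fmorph_inj (real_complex R)).
  by rewrite -trace_map_mx e (Fdtr _ uM) rmorph_sum.
have mulF : forall X Y h h', map_mx (real_complex R) X = Fd M (fun i => (real_complex R) (h i)) ->
    map_mx (real_complex R) Y = Fd M (fun i => (real_complex R) (h' i)) ->
    map_mx (real_complex R) (X *m Y) = Fd M (fun i => (real_complex R) (h i * h' i)).
  move=> X Y h h' eX eY; rewrite map_mxM eX eY (FdM _ _ uM).
  by apply: Fd_ext => i; rewrite rmorphM.
have trW := trF _ _ WC.
have T0 : 0 < \sum_i d i by rewrite -trW.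
have VC : map_mx (real_complex R) V = Fd M (fun i => (real_complex R) ((d i + c * \sum_j d j)^-1)).
  rewrite /V map_invmx map_mxD WC map_scalar_mx (Fdc _ uM) FdD (FdV uM).
    by apply: Fd_ext => i; rewrite /alpha trW -rmorphD fmorphV.
  move=> i /=; rewrite /alpha trW -rmorphD fmorph_eq0 gt_eqF //.
  by apply: ltr_wpDl => //; apply: mulr_gt0.
rewrite (trF _ _ (mulF _ _ _ _ (mulF _ _ _ _ (mulF _ _ _ _ VC VC) VC) WC)).
rewrite (trF _ _ (mulF _ _ _ _ (mulF _ _ _ _ (mulF _ _ _ _ VC VC) WC) WC)).
rewrite (trF _ _ (mulF _ _ _ _ (mulF _ _ _ _ VC VC) WC)).
rewrite (trF _ _ (mulF _ _ _ _ VC VC)) (trF _ _ (mulF _ _ _ _ VC WC)).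
rewrite (trF _ _ VC) trW.
exact: (scal d0 T0 hc).
Qed.
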